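(* For every integer $g\ge 0$, let $n'_g$ denote the number of gapsets of genus $g$ and depth at most $3$. Then for all $g \ge 2$, $n'_g \ge n'_{g-1}+n'_{g-2}$.
   Context: A gapset is a finite set $G \subset \mathbb{N}_+=\{1,2,3,\dots\}$ such that for all $z \in G$, whenever $z=x+y$ with $x,y\in\mathbb{N}_+$, we have $x\in G$ or $y\in G$. The multiplicity of $G$ is the least $m\ge 1$ with $m\notin G$; its conductor is $c=\max G+1$ (with $c=0$ if $G=\emptyset$); its genus is $|G|$; its depth is $\lceil c/m\rceil$. *)

(* Defs.v *)
From mathcomp Require Import all_boot all_order finmap.
From mathcomp Require Import classical_sets cardinality.
Set Implicit Arguments. Unset Strict Implicit. Unset Printing Implicit Defensive.

Definition gapset (G : {fset nat}) : Prop :=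
  (0 \notin G) /\
  (forall z x y, z \in G -> (0 < x)%N -> (0 < y)%N -> (x + y)%N = z -> (x \in G) || (y \in G)).

Definition conductor (G : {fset nat}) : nat :=
  if G == fset0%fset then 0 else (\max_(x <- G) x).+1.

(* multiplicity: least m >= 1 with m \notin G (searched among 1 .. max G + 1,
   which always contains a non-element) *)
Definition multiplicity (G : {fset nat}) : nat :=
  (find (fun k => k.+1 \notin G) (iota 0 (\max_(x <- G) x).+1)).+1.

Definition genus (G : {fset nat}) : nat := #|` G|%fset.

(* depth = ceil (c / m) *)
Definition depth (G : {fset nat}) : nat :=
  (conductor G + multiplicity G).-1 %/ multiplicity G.

(* n'_g : number of gapsets of genus g and depth at most 3
   (fset_set of an infinite set would be empty; the set is in fact finite) *)
Definition n' (g : nat) : nat :=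
  (#|` fset_set [set G : {fset nat} | gapset G /\ genus G = g /\ depth G <= 3]|)%fset.

(* Main.v *)
Require Import Defs.
From mathcomp Require Import all_boot all_order finmap.
From mathcomp Require Import classical_sets cardinality.
From mathcomp Require Import zify.
Open Scope fset_scope.

Lemma le_max (G : {fset nat}) x : x \in G -> x <= \max_(y <- G) y.
Proof. move=> Hx. exact: (leq_bigmax_seq (P:=xpredT) (F:=id) x Hx). Qed.

Lemma multP (G : {fset nat}) :
  let k := multiplicity G in
  0 < k /\ k \notin G /\ forall j, 0 < j < k -> j \in G.
Proof.
rewrite /multiplicity.
set M := \max_(y <- G) y.
set s := iota 0 M.+1.
set p := (fun k => k.+1 \notin G).
have hs : has p s.
  apply/hasP; exists M; first by rewrite mem_iota /=; lia.
  rewrite /p /=. apply/negP => /le_max. rewrite ltnn. done.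
have hf : find p s < size s by rewrite -has_find.
split => //; split.
  have := nth_find 0 hs. by rewrite /p nth_iota // -(size_iota 0 M.+1).
move=> j /andP[j0 jk].
have hj : j.-1 < find p s by move: jk; rewrite /multiplicity -/M -/s -/p; lia.
have := before_find 0 hj.
rewrite nth_iota; last by move: hf; rewrite size_iota; lia.
rewrite /p /= add0n prednK //. by move/negbFE.
Qed.

Lemma multE (G : {fset nat}) m : 0 < m -> m \notin G -> (forall j, 0 < j < m -> j \in G) ->
  multiplicity G = m.
Proof.
move=> m0 mG H. have [k0 [kG kH]] := multP G.
case: (ltngtP (multiplicity G) m) => // h.
  by move: kG; rewrite H // k0.
by move: mG; rewrite kH // m0.
Qed.

Lemma max_lt_cond (G : {fset nat}) x : x \in G -> x < conductor G.
Proof.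
move=> Hx; rewrite /conductor; case: eqP => [E|_]; first by move: Hx; rewrite E.
by rewrite ltnS le_max.
Qed.

Lemma depth_bound (G : {fset nat}) : depth G <= 3 -> forall x, x \in G -> x < 3 * multiplicity G.
Proof.
move=> D x Hx. have [m0 _] := multP G.
move: D; rewrite /depth -ltnS ltn_divLR // => D.
have := max_lt_cond G x Hx. lia.
Qed.

Lemma mult_genus (G : {fset nat}) : multiplicity G <= genus G + 1.
Proof.
have [m0 [_ H]] := multP G.
set m := multiplicity G in m0 H *. clearbody m.
have sub : [fset x in iota 1 m.-1] `<=` G.
  apply/fsubsetP => x; rewrite in_fset /= mem_iota => hx; apply: H. lia.
have := fsubset_leq_card sub.
rewrite card_fseq undup_id ?iota_uniq // size_iota /genus. lia.
Qed.

Definition sh m x := if x < m then x else if x < 2 * m then x.+1 else x.+2.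

Lemma sh_lo m x : x < m -> sh m x = x.
Proof. by rewrite /sh => ->. Qed.
Lemma sh_mid m x : m <= x < 2 * m -> sh m x = x.+1.
Proof. move=> /andP[h1 h2]; rewrite /sh ifN ?h2 //; lia. Qed.
Lemma sh_hi m x : 2 * m <= x -> sh m x = x.+2.
Proof. move=> h; rewrite /sh ifN; last lia. rewrite ifN //; lia. Qed.

Lemma sh_cases m x : (x < m /\ sh m x = x) \/ (m <= x < 2 * m /\ sh m x = x.+1)
   \/ (2 * m <= x /\ sh m x = x.+2).
Proof.
case: (ltnP x m) => h1; first by left; rewrite sh_lo.
case: (ltnP x (2 * m)) => h2; first by right; left; rewrite sh_mid ?h1.
by right; right; rewrite sh_hi.
Qed.

Lemma sh_inj m : injective (sh m).
Proof.
move=> x y; have := sh_cases m x; have := sh_cases m y; lia.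
Qed.

Definition phi (b : bool) (G : {fset nat}) : {fset nat} :=
  let m := multiplicity G in
  m |` (if b then (2 * m).+1 |` (sh m @` G) else sh m @` G).

Lemma phi_mem b G y : y \in phi b G =
  [|| y == multiplicity G, b && (y == (2 * multiplicity G).+1) | y \in sh (multiplicity G) @` G].
Proof.
rewrite /phi !inE; case: b => //=.
by rewrite !inE.
Qed.

Lemma phi_sh b G x : (sh (multiplicity G) x \in phi b G) = (x \in G).
Proof.
have [m0 [mG _]] := multP G.
rewrite phi_mem mem_imfset; last exact: sh_inj.
have := sh_cases (multiplicity G) x.
case: (x \in G) => /=; first by rewrite !orbT.
rewrite orbF => h; apply/negP => /orP[/eqP|/andP[_ /eqP]]; lia.
Qed.

Lemma phi_2m b G : ((2 * multiplicity G).+1 \in phi b G) = b.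
Proof.
have [m0 [mG _]] := multP G.
rewrite phi_mem.
have -> : ((2 * multiplicity G).+1 == multiplicity G) = false by apply/eqP; lia.
rewrite eqxx andbT /=. case: b => //=.
apply/imfsetP => -[x _ e]; have := sh_cases (multiplicity G) x; lia.
Qed.

Lemma phi_memP b G y : y \in phi b G ->
  y = multiplicity G \/ y = (2 * multiplicity G).+1 \/ exists2 x, x \in G & y = sh (multiplicity G) x.
Proof.
rewrite phi_mem => /or3P[/eqP|/andP[_ /eqP]|/imfsetP[x xG e]]; auto.
right; right; by exists x.
Qed.

Lemma phi_low b G j : 0 < j <= multiplicity G -> j \in phi b G.
Proof.
have [m0 [mG H]] := multP G.
move=> hj; case: (ltngtP j (multiplicity G)) => h; [|lia|].
  rewrite -(@sh_lo _ _ h) phi_sh; apply: H; lia.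
by rewrite phi_mem h eqxx.
Qed.

Lemma phi_mult b G : multiplicity (phi b G) = (multiplicity G).+1.
Proof.
have [m0 [mG H]] := multP G.
apply: multE => //.
  apply/negP => /phi_memP[|[|[x xG e]]]; try lia.
  have := sh_cases (multiplicity G) x; case=> [|[|]] [? ?]; try lia.
  have xm : x = multiplicity G by lia.
  by move: mG; rewrite -xm xG.
move=> j hj; apply: phi_low; lia.
Qed.

Lemma phi_card b G : genus (phi b G) = (genus G + b + 1)%N.
Proof.
have [m0 [mG H]] := multP G.
rewrite /genus /phi.
have cS : #|` sh (multiplicity G) @` G| = #|` G|.
  by apply/eqP/card_in_imfsetP => x y _ _; apply: sh_inj.
have n2 : (2 * multiplicity G).+1 \notin sh (multiplicity G) @` G.
  apply/imfsetP => -[x _ e]; have := sh_cases (multiplicity G) x; lia.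
have n1 : multiplicity G \notin sh (multiplicity G) @` G.
  apply/imfsetP => -[x xG e]; have := sh_cases (multiplicity G) x; case=> [|[|]] [? ?]; try lia.
case: b => /=; rewrite !cardfsU1 ?cS.
  rewrite n2 !inE negb_or n1 andbT.
  have -> : (multiplicity G != (2 * multiplicity G).+1) by apply/eqP; lia.
  rewrite /=; lia.
rewrite n1 /=; lia.
Qed.

Lemma phi_depth b G : depth G <= 3 -> depth (phi b G) <= 3.
Proof.
move=> D; have B := depth_bound G D.
have [m0 [mG H]] := multP G.
have ne : phi b G != fset0.
  apply/eqP => e; have : multiplicity G \in phi b G by apply: phi_low; lia.
  by rewrite e inE.
have mx : \max_(y <- phi b G) y <= 3 * multiplicity G + 1.
  apply/bigmax_leqP_seq => y yin _; move: yin => /phi_memP[|[|[x xG e]]]; try lia.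
  have := B x xG; have := sh_cases (multiplicity G) x; lia.
rewrite /depth /conductor (negbTE ne) phi_mult -ltnS ltn_divLR //. lia.
Qed.

Lemma phi_gap b G : gapset G -> depth G <= 3 -> gapset (phi b G).
Proof.
move=> [G0 GG] D; have B := depth_bound G D.
have [m0 [mG H]] := multP G.
split.
  apply/negP => /phi_memP[|[|[x xG e]]]; try lia.
  have := sh_cases (multiplicity G) x; case=> [|[|]] [? ?]; try lia.
  have x0 : x = 0 by lia.
  by move: G0; rewrite -x0 xG.
move=> z x y zin x0 y0 exy.
case: (leqP x (multiplicity G)) => hx; first by apply/orP; left; apply: phi_low; lia.
case: (leqP y (multiplicity G)) => hy; first by apply/orP; right; apply: phi_low; lia.
move: zin => /phi_memP[|[|[w wG e]]]; try lia.
have := B w wG; have := sh_cases (multiplicity G) w.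
case=> [|[|]] [hw1 hw2]; try lia.
move=> hw3.
have : (x.-1 \in G) || (y.-1 \in G) by apply: GG wG _ _ _; lia.
case/orP.
  move=> ax; apply/orP; left.
  have -> : x = sh (multiplicity G) x.-1 by rewrite sh_mid; lia.
  by rewrite phi_sh.
move=> ay; apply/orP; right.
have -> : y = sh (multiplicity G) y.-1 by rewrite sh_mid; lia.
by rewrite phi_sh.
Qed.

Lemma phi_inj b b' G1 G2 : phi b G1 = phi b' G2 -> b = b' /\ G1 = G2.
Proof.
move=> e.
have hm : multiplicity G1 = multiplicity G2.
  have := congr1 multiplicity e; rewrite !phi_mult; exact: succn_inj.
split; first by rewrite -(phi_2m b G1) e hm phi_2m.
apply/fsetP => x; by rewrite -(phi_sh b G1 x) e hm phi_sh.
Qed.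

Definition A k := [set G : {fset nat} | gapset G /\ genus G = k /\ depth G <= 3]%classic.

Lemma A_fin k : finite_set (A k).
Proof.
apply: (finite_subfset (fpowerset [fset x in iota 0 (3 * (k + 1))])).
move=> G [gG [gk dG]]; rewrite /= fpowersetE; apply/fsubsetP => x xG.
rewrite in_fset mem_iota /=.
have := depth_bound G dG x xG; have := mult_genus G; lia.
Qed.

Close Scope fset_scope.

Theorem mainTheorem2 (g : nat) : 2 <= g -> n' (g - 1) + n' (g - 2) <= n' g.
Proof.
Open Scope fset_scope.
move=> g2.
change (#|` fset_set (A (g - 1))| + #|` fset_set (A (g - 2))| <= #|` fset_set (A g)|)%N.
set F1 := fset_set (A (g - 1)); set F2 := fset_set (A (g - 2)); set F := fset_set (A g).
have memA k G : G \in fset_set (A k) -> gapset G /\ genus G = k /\ depth G <= 3.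
  rewrite in_fset_set; last exact: A_fin. by rewrite in_setE.
have I1 : [fset phi false G | G in F1] `<=` F.
  apply/fsubsetP => H /imfsetP[G GF ->]; rewrite /F in_fset_set; last exact: A_fin.
  rewrite in_setE.
  have [gG [gk dG]] := memA _ _ GF.
  split; [exact: phi_gap | split; [rewrite phi_card gk /=; lia | exact: phi_depth]].
have I2 : [fset phi true G | G in F2] `<=` F.
  apply/fsubsetP => H /imfsetP[G GF ->]; rewrite /F in_fset_set; last exact: A_fin.
  rewrite in_setE.
  have [gG [gk dG]] := memA _ _ GF.
  split; [exact: phi_gap | split; [rewrite phi_card gk /=; lia | exact: phi_depth]].
have c1 : #|` [fset phi false G | G in F1]| = #|` F1|.
  by apply/eqP/card_in_imfsetP => x y _ _ /phi_inj[].
have c2 : #|` [fset phi true G | G in F2]| = #|` F2|.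
  by apply/eqP/card_in_imfsetP => x y _ _ /phi_inj[].
have dis : [fset phi false G | G in F1] `&` [fset phi true G | G in F2] = fset0.
  apply/fsetP => H; rewrite !inE; apply/negP => /andP[/imfsetP[G1 _ ->] /imfsetP[G2 _]].
  by case/phi_inj.
have := fsubset_leq_card (introT (fsubUsetP _ _ _) (conj I1 I2)).
rewrite cardfsU dis cardfs0 subn0 c1 c2 //.
Qed.
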